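(* There exists $e\in S$ such that $(g(e))_{g\in\Gamma_f}$ is a basis of $S$ over $S_0$. Moreover, $e$ can be chosen so that $p$ divides none of the elements $p_i(e)$, $0\le i\le p-2$, where $p_i=\frac{1}{|\Gamma_f|}\sum_{g\in\Gamma_f}\chi(g)^{-i}g$.
   Context: $p$ odd prime, $\mathcal{K}$ absolutely unramified complete discretely valued field of characteristic $0$ with perfect residue field $k$, $W=W(k)$, $\chi$ the cyclotomic character of $\Gamma_{\mathcal{K}}$. $\pi=[\varepsilon]-1\in W(R)$ where $\varepsilon$ is a compatible system of $p^n$-th roots of unity ($\varepsilon^{(1)}\ne1$), $S=W[[\pi]]$ with action $g(\pi)=(1+\pi)^{\chi(g)}-1$ of $\Gamma=\mathrm{Gal}(\mathcal{K}(\mu_{p^\infty})/\mathcal{K})$; $\Gamma_f$ is the torsion subgroup of $\Gamma$ (of order $p-1$) and $S_0=S^{\Gamma_f}=W[[\pi_0]]$ with $\pi_0=-p+\sum_{a\in\mathbb{F}_p}[\varepsilon]^a$. *)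

(* Defs.v *)
From HB Require Import structures.
From Stdlib Require Import ClassicalEpsilon.
From mathcomp Require Import all_boot all_order all_algebra.
Set Implicit Arguments. Unset Strict Implicit. Unset Printing Implicit Defensive.
Import Order.TTheory GRing.Theory.
Local Open Scope ring_scope.

(* W = W(k), k perfect of characteristic p, is characterised (Serre, Local
   Fields II.5) as a strict p-ring: p-torsion free, p-adically separated and
   complete, with W/pW a (nonzero) perfect field. *)
Definition pdvd (W : comUnitRingType) (p : nat) (x : W) : Prop :=
  exists y : W, x = p%:R * y.

Definition strict_p_ring (W : comUnitRingType) (p : nat) : Prop :=
  (forall x : W, p%:R * x = 0 -> x = 0) /\
  [/\ ~ ((p%:R : W) \is a GRing.unit),
      (forall x : W, ~ pdvd p x -> x \is a GRing.unit),
      (forall x : W, exists y z : W, x = y ^+ p + p%:R * z),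
      (forall x : W, (forall n : nat, exists y : W, x = (p%:R) ^+ n * y) -> x = 0)
    & (forall s : nat -> W,
        (forall n : nat, exists y : W, s n.+1 - s n = (p%:R) ^+ n * y) ->
        exists l : W, forall n : nat, exists y : W, l - s n = (p%:R) ^+ n * y)].

Section Series.
Variable R : comUnitRingType.

Definition series := nat -> R.
Definition szero : series := fun _ => 0.
Definition sone : series := fun n => if n == 0%N then 1 else 0.
Definition sadd (f g : series) : series := fun n => f n + g n.
Definition smul (f g : series) : series :=
  fun n => \sum_(i < n.+1) f i * g (n - i)%N.
Definition sscale (c : R) (f : series) : series := fun n => c * f n.
Definition spow (f : series) (k : nat) : series := iter k (smul f) sone.
(* composition f(u), for u with zero constant term *)
Definition scomp (f u : series) : series :=
  fun m => \sum_(k < m.+1) f k * spow u k m.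

(* binomial coefficient binom(z, n) in a torsion-free ring: the c with
   n! c = z (z-1) ... (z-n+1) (it exists and is unique for z in Z_p) *)
Definition binomR (z : R) (n : nat) : R :=
  epsilon (inhabits 0) (fun c : R => (n`!)%:R * c = \prod_(j < n) (z - (j : nat)%:R)).

(* (1 + pi)^z - 1 *)
Definition pow1pX_sub1 (z : R) : series :=
  fun n => if n == 0%N then 0 else binomR z n.

(* action of g with chi(g) = z on S = W[[pi]]: pi |-> (1+pi)^z - 1 *)
Definition gact (z : R) (f : series) : series := scomp f (pow1pX_sub1 z).
End Series.

Section Gammaf.
Variables (p : nat) (W : comUnitRingType) (omega : 'I_p -> W).
(* Gamma_f is indexed by a in F_p^x, chi(g_a) = omega a (Teichmueller lift) *)

Definition fixedGf (f : series W) : Prop :=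
  forall a : 'I_p, (0 < a)%N -> gact (omega a) f =1 f.

Definition combo (c : 'I_p -> series W) (e : series W) : series W :=
  fun n => \sum_(a < p | (0 < a)%N) smul (c a) (gact (omega a) e) n.

Definition is_basis_over_S0 (e : series W) : Prop :=
  (forall f : series W, exists c : 'I_p -> series W,
      (forall a : 'I_p, (0 < a)%N -> fixedGf (c a)) /\ f =1 combo c e)
  /\ (forall c : 'I_p -> series W,
      (forall a : 'I_p, (0 < a)%N -> fixedGf (c a)) -> combo c e =1 szero W ->
      forall a : 'I_p, (0 < a)%N -> c a =1 szero W).

Definition proj_i (i : nat) (e : series W) : series W :=
  fun n => ((p.-1)%:R)^-1 *
    \sum_(a < p | (0 < a)%N) ((omega a)^-1) ^+ i * gact (omega a) e n.

Definition pdvd_series (f : series W) : Prop :=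
  exists h : series W, f =1 sscale (p%:R) h.
End Gammaf.

(* Main.v *)
Require Import Defs.
From mathcomp Require Import all_boot all_order all_algebra.
From mathcomp Require Import all_field zify ring.
From Stdlib Require Import ClassicalEpsilon FunctionalExtensionality.
Import GRing.Theory.
Local Open Scope ring_scope.

Lemma sum_trunc (R : nmodType) n m (F : nat -> R) : (m <= n)%N ->
  (forall i, (m <= i)%N -> F i = 0) -> \sum_(i < n) F i = \sum_(i < m) F i.
Proof.
move=> mn F0.
rewrite (big_ord_widen (n + m) F (leq_addr m n)) (big_ord_widen (n + m) F (leq_addl n m)).
rewrite [LHS]big_mkcond [RHS]big_mkcond; apply: eq_bigr => i _ /=.
case: (ltnP i n) => hn; case: (ltnP i m) => hm //; first by rewrite F0.
by have := leq_trans mn hn; rewrite leqNgt hm.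
Qed.

Section Bridge.
Context {R : comUnitRingType}.
Implicit Types f g u v : series R.

Definition tp (N : nat) f : {poly R} := \poly_(i < N) f i.

Lemma coef_tp N f i : (tp N f)`_i = if (i < N)%N then f i else 0.
Proof. by rewrite coef_poly. Qed.

Lemma coef_tpE N f i : (i < N)%N -> (tp N f)`_i = f i.
Proof. by move=> h; rewrite coef_tp h. Qed.

Definition agree N (P Q : {poly R}) := forall i, (i < N)%N -> P`_i = Q`_i.

Lemma agreeM N P P' Q Q' : agree N P P' -> agree N Q Q' -> agree N (P * Q) (P' * Q').
Proof.
move=> hP hQ i hi; rewrite !coefM; apply: eq_bigr => j _.
have hj : (j < N)%N by apply: leq_ltn_trans hi; rewrite -ltnS.
rewrite hP // hQ //; apply: leq_ltn_trans hi; exact: leq_subr.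
Qed.

Lemma agreeX N P Q k : agree N P Q -> agree N (P ^+ k) (Q ^+ k).
Proof.
move=> h; elim: k => [|k IH]; first by move=> i _.
by rewrite !exprS; apply: agreeM.
Qed.

Lemma coefX_low (Q : {poly R}) k m : Q`_0%N = 0 -> (m < k)%N -> (Q ^+ k)`_m = 0.
Proof.
move=> Q0; elim: k m => [|k IH] m //= hm.
rewrite exprS coefM big1 // => [[j hj]] _ /=.
case: j hj => [|j] hj; first by rewrite Q0 mul0r.
rewrite IH ?mulr0 //; lia.
Qed.

Lemma coefX_diag (Q : {poly R}) k : Q`_0%N = 0 -> (Q ^+ k)`_k = Q`_1%N ^+ k.
Proof.
move=> Q0; elim: k => [|k IH]; first by rewrite expr0 coefC.
rewrite exprS coefM big_ord_recl /= Q0 mul0r add0r big_ord_recl /=.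
rewrite subSS subn0 IH -exprS big1 ?addr0 // => [[j hj]] _ /=.
rewrite /bump /= !add1n coefX_low ?mulr0 //; lia.
Qed.

Lemma coef_comp_K (P Q : {poly R}) K m : (size P <= K)%N ->
  (P \Po Q)`_m = \sum_(i < K) P`_i * (Q ^+ i)`_m.
Proof.
move=> hK; rewrite coef_comp_poly; symmetry. have := sum_trunc _ K (size P) (fun i => P`_i * (Q ^+ i)`_m) hK. move=> ->. by []. move=> i hi.
by rewrite nth_default ?mul0r //; apply: leq_trans hK hi.
Qed.

Lemma agree_comp N P P' Q Q' : agree N P P' -> agree N Q Q' -> Q`_0%N = 0 -> Q'`_0%N = 0 ->
  agree N (P \Po Q) (P' \Po Q').
Proof.
move=> hP hQ Q0 Q'0 m hm.
rewrite (coef_comp_K P Q _ m (leq_maxl (size P) (size P'))).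
rewrite (coef_comp_K P' Q' _ m (leq_maxr (size P) (size P'))).
rewrite (big_ord_widen (maxn (size P) (size P') + N) (fun i => P`_i * (Q ^+ i)`_m) (leq_addr _ _)).
rewrite (big_ord_widen (maxn (size P) (size P') + N) (fun i => P'`_i * (Q' ^+ i)`_m) (leq_addr _ _)).
rewrite [LHS]big_mkcond [RHS]big_mkcond; apply: eq_bigr => [[i hi]] _ /=.
case: (ltnP i N) => hiN.
  by rewrite hP // (agreeX _ _ _ i hQ) //; case: ifP.
by rewrite !coefX_low ?mulr0 //; try case: ifP; apply: leq_trans hm hiN.
Qed.

Lemma smul_tp N f g n : (n < N)%N -> smul f g n = (tp N f * tp N g)`_n.
Proof.
move=> hn; rewrite coefM /smul; apply: eq_bigr => [[i hi]] _ /=.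
rewrite !coef_tpE //; first by apply: leq_ltn_trans hn; exact: leq_subr.
by apply: leq_ltn_trans hn; rewrite -ltnS.
Qed.

Lemma spow_tp N f k n : (n < N)%N -> spow f k n = ((tp N f) ^+ k)`_n.
Proof.
elim: k n => [|k IH] n hn; first by rewrite /spow /= /sone coefC.
rewrite exprS coefM /spow iterS -/(spow f k) /smul; apply: eq_bigr => [[i hi]] _ /=.
rewrite coef_tpE; last by apply: leq_ltn_trans hn; rewrite -ltnS.
by rewrite IH //; apply: leq_ltn_trans hn; exact: leq_subr.
Qed.

Lemma spow_low f k m : f 0%N = 0 -> (m < k)%N -> spow f k m = 0.
Proof.
move=> f0 hm; rewrite (@spow_tp m.+1) // coefX_low // coef_tpE //.
Qed.

Lemma spow_diag f k : f 0%N = 0 -> spow f k k = f 1%N ^+ k.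
Proof.
move=> f0; rewrite (@spow_tp k.+2) // coefX_diag ?coef_tpE //.
Qed.

Lemma scomp_tp N f u m : (m < N)%N -> u 0%N = 0 ->
  scomp f u m = (tp N f \Po tp N u)`_m.
Proof.
move=> hm u0; rewrite (coef_comp_K _ _ _ m (size_poly N f)).
have -> := sum_trunc _ N m.+1 (fun i => (tp N f)`_i * (tp N u ^+ i)`_m) hm.
  apply: eq_bigr => [[i hi]] _ /=.
  by rewrite (spow_tp _ _ _ _ hm) coef_tpE //; apply: leq_ltn_trans hm.
by move=> i hi; rewrite coefX_low ?mulr0 // coef_tpE //; apply: leq_ltn_trans hm.
Qed.

Lemma scomp0 f u : u 0%N = 0 -> scomp f u 0%N = f 0%N.
Proof. by move=> u0; rewrite /scomp big_ord1 /spow /= /sone /= mulr1. Qed.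

Lemma tp0 N u : (0 < N)%N -> u 0%N = 0 -> (tp N u)`_0%N = 0.
Proof. by move=> hN u0; rewrite coef_tpE. Qed.

Lemma agree_tp_scomp N f u : u 0%N = 0 -> agree N (tp N (scomp f u)) (tp N f \Po tp N u).
Proof. by move=> u0 i hi; rewrite coef_tpE // (scomp_tp _ _ _ _ hi u0). Qed.

Lemma agree_tp_smul N f g : agree N (tp N (smul f g)) (tp N f * tp N g).
Proof. by move=> i hi; rewrite coef_tpE // (smul_tp _ _ _ _ hi). Qed.

Lemma scompA f u v : u 0%N = 0 -> v 0%N = 0 ->
  scomp (scomp f u) v =1 scomp f (scomp u v).
Proof.
move=> u0 v0 m; have hm : (m < m.+1)%N by [].
have uv0 : scomp u v 0%N = 0 by rewrite scomp0.
rewrite (scomp_tp _ _ _ _ hm v0) (scomp_tp _ _ _ _ hm uv0).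
rewrite (agree_comp m.+1 _ (tp m.+1 f \Po tp m.+1 u) _ (tp m.+1 v)) //;
  last 3 first.
- exact: agree_tp_scomp.
- by rewrite coef_tpE.
- by rewrite coef_tpE.
have hA := agree_tp_scomp m.+1 u v v0.
rewrite -comp_polyA; apply: (agree_comp m.+1 _ _ _ _ _ _ _ _ m hm) => //.
- by move=> i hi; rewrite hA.
- by rewrite -hA // coef_tpE.
- by rewrite coef_tpE.
Qed.

Lemma scompM f g u : u 0%N = 0 ->
  scomp (smul f g) u =1 smul (scomp f u) (scomp g u).
Proof.
move=> u0 m; have hm : (m < m.+1)%N by [].
rewrite (scomp_tp _ _ _ _ hm u0) (smul_tp _ _ _ _ hm).
rewrite (agree_comp m.+1 _ (tp m.+1 f * tp m.+1 g) _ (tp m.+1 u)) //;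
  last 3 first.
- exact: agree_tp_smul.
- by rewrite coef_tpE.
- by rewrite coef_tpE.
rewrite comp_polyM; apply: (agreeM m.+1 _ _ _ _ _ _ m hm).
- by move=> i hi; rewrite (agree_tp_scomp m.+1 f u u0).
- by move=> i hi; rewrite (agree_tp_scomp m.+1 g u u0).
Qed.

Lemma scomp_sum (I : finType) (Q : pred I) (a : I -> R) (F : I -> series R) v m :
  scomp (fun n => \sum_(i | Q i) a i * F i n) v m = \sum_(i | Q i) a i * scomp (F i) v m.
Proof.
rewrite /scomp; under eq_bigr do rewrite mulr_suml.
rewrite exchange_big /=; apply: eq_bigr => i _; rewrite mulr_sumr.
by apply: eq_bigr => k _; rewrite mulrA.
Qed.

Lemma scomp_scale (c : R) f v m : scomp (fun n => c * f n) v m = c * scomp f v m.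
Proof. by rewrite /scomp mulr_sumr; apply: eq_bigr => k _; rewrite mulrA. Qed.

Lemma spow_scale (c : R) u k n : spow (fun j => c * u j) k n = c ^+ k * spow u k n.
Proof.
elim: k n => [|k IH] n; first by rewrite expr0 mul1r.
rewrite /spow !iterS -!/(spow _ k) /smul exprS mulr_sumr.
by apply: eq_bigr => i _; rewrite IH; ring.
Qed.

Lemma scomp_inner_scale (c : R) f u m :
  scomp f (fun j => c * u j) m = scomp (fun n => c ^+ n * f n) u m.
Proof. by rewrite /scomp; apply: eq_bigr => k _; rewrite spow_scale; ring. Qed.

Lemma scomp_zero u m : scomp (fun _ => 0) u m = 0.
Proof. by rewrite /scomp big1 // => k _; rewrite mul0r. Qed.

End Bridge.

Lemma exists_nonroot p r : prime p -> (0 < r < p.-1)%N ->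
  exists b, (0 < b < p)%N /\ ~~ (p %| b ^ r - 1)%N.
Proof.
move=> pr hr.
pose rs := [seq (i%:R : 'F_p) | i <- iota 1 p.-1].
have p_gt1 := prime_gt1 pr.
have memrs x : x \in rs -> exists2 i, (0 < i < p)%N & x = i%:R.
  case/mapP => i; rewrite mem_iota => /andP[h1 h2] ->; exists i => //.
  by apply/andP; split => //; lia.
have nz i : (0 < i < p)%N -> (i%:R : 'F_p) != 0.
  move=> /andP[h1 h2]; apply/eqP => /(congr1 val) /=; rewrite val_Fp_nat //.
  by rewrite modn_small //; lia.
have all_unity : all (p.-1).-unity_root rs.
  apply/allP => x /memrs [i hi ->]; rewrite unity_rootE.
  have hx := nz i hi.
  have := expf_card (i%:R : 'F_p); rewrite card_Fp //.
  rewrite -(prednK (prime_gt0 pr)) exprS => h.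
  by apply/eqP; apply: (mulfI hx); rewrite h mulr1.
have urs : uniq rs.
  rewrite map_inj_in_uniq ?iota_uniq // => i j; rewrite !mem_iota => hi hj.
  move/(congr1 val) => /=; rewrite !val_Fp_nat // !modn_small //; lia.
have szrs : size rs = p.-1 by rewrite size_map size_iota.
have pm1 : (0 < p.-1)%N by lia.
have := cyclic.has_prim_root pm1 all_unity urs.
rewrite szrs leqnn => /(_ isT) /hasP [g /memrs [b hb ->] pg].
exists b; split => //.
apply/negP => hd.
have : ~~ (p.-1 %| r)%N.
  by apply/negP => /dvdn_leq; case/andP: hr => h1 h2 /(_ h1); lia.
rewrite (prim_order_dvd pg) -natrX.
have e : (b ^ r = (b ^ r - 1) + 1)%N.
  by rewrite subnK // expn_gt0; case/andP: hb => ->.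
rewrite e natrD.
have -> : ((b ^ r - 1)%:R : 'F_p) = 0.
  by apply: val_inj => /=; rewrite val_Fp_nat //; apply/eqP; rewrite -/(dvdn p _) hd.
by rewrite add0r eqxx.
Qed.

Lemma fact_dvd j m : (j <= m)%N -> (j`! %| m`!)%N.
Proof.
elim: m => [|m IH]; first by rewrite leqn0 => /eqP ->.
rewrite leq_eqVlt => /orP [/eqP -> //|h].
by rewrite factS; apply: dvdn_mull; apply: IH.
Qed.

Section Main.
Variables (p : nat) (W : comUnitRingType) (omega : 'I_p -> W).
Hypotheses (pr : prime p) (odd_p : odd p) (sp : strict_p_ring W p).
Hypothesis hom : forall a : 'I_p, (0 < a)%N ->
     omega a ^+ p.-1 = 1 /\ pdvd p (omega a - (a : nat)%:R).

Let P := (p%:R : W).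

Definition cong (K : nat) (x y : W) := exists t, x - y = P ^+ K * t.

Lemma cong_refl K x : cong K x x.
Proof. by exists 0; rewrite subrr mulr0. Qed.
Lemma cong_sym K x y : cong K x y -> cong K y x.
Proof. by case=> t h; exists (- t); rewrite mulrN -h; ring. Qed.
Lemma cong_trans K x y z : cong K x y -> cong K y z -> cong K x z.
Proof.
by case=> t h [s h']; exists (t + s); rewrite mulrDr -h -h' addrA subrK.
Qed.
Lemma cong_add K x y x' y' : cong K x x' -> cong K y y' -> cong K (x + y) (x' + y').
Proof.
case=> t h [s h']; exists (t + s); rewrite mulrDr -h -h'; ring.
Qed.
Lemma cong_opp K x y : cong K x y -> cong K (- x) (- y).
Proof. by case=> t h; exists (- t); rewrite mulrN -h; ring. Qed.
Lemma cong_sub K x y x' y' : cong K x x' -> cong K y y' -> cong K (x - y) (x' - y').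
Proof. by move=> h1 h2; apply: cong_add => //; apply: cong_opp. Qed.
Lemma cong_mul K x y x' y' : cong K x x' -> cong K y y' -> cong K (x * y) (x' * y').
Proof.
case=> t h [s h']; exists (t * y + x' * s).
have -> : x * y - x' * y' = (x - x') * y + x' * (y - y') by ring.
by rewrite h h'; ring.
Qed.
Lemma cong_le K K' x y : (K <= K')%N -> cong K' x y -> cong K x y.
Proof.
move=> hK [t h]; exists (P ^+ (K' - K) * t).
by rewrite h mulrA -exprD subnKC.
Qed.
Lemma cong_sum K (I : finType) (Q : pred I) (F G : I -> W) :
  (forall i, Q i -> cong K (F i) (G i)) ->
  cong K (\sum_(i | Q i) F i) (\sum_(i | Q i) G i).
Proof.
move=> h; apply: (big_ind2 (cong K)) => //; first exact: cong_refl.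
by move=> *; apply: cong_add.
Qed.
Lemma cong_prod K (I : finType) (Q : pred I) (F G : I -> W) :
  (forall i, Q i -> cong K (F i) (G i)) ->
  cong K (\prod_(i | Q i) F i) (\prod_(i | Q i) G i).
Proof.
move=> h; apply: (big_ind2 (cong K)) => //; first exact: cong_refl.
by move=> *; apply: cong_mul.
Qed.
Lemma cong_exp K x y n : cong K x y -> cong K (x ^+ n) (y ^+ n).
Proof.
move=> h; elim: n => [|n IH]; first exact: cong_refl.
by rewrite !exprS; apply: cong_mul.
Qed.

Lemma P_tf x : P * x = 0 -> x = 0.
Proof. by case: sp => h _; apply: h. Qed.

Lemma PX_tf K x : P ^+ K * x = 0 -> x = 0.
Proof.
elim: K x => [|K IH] x; first by rewrite expr0 mul1r.
by rewrite exprSr -mulrA => /IH /P_tf.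
Qed.

Lemma PX_cancel K x y : P ^+ K * x = P ^+ K * y -> x = y.
Proof.
by move=> h; apply/eqP; rewrite -subr_eq0; apply/eqP/(PX_tf K); rewrite mulrBr h subrr.
Qed.

Lemma cong_sep x y : (forall K, cong K x y) -> x = y.
Proof.
case: sp => _ [_ _ _ hsep _] h; apply/eqP; rewrite -subr_eq0; apply/eqP.
apply: hsep => n; case: (h n) => t ht; by exists t.
Qed.

Lemma P_nunit : ~ (P \is a GRing.unit).
Proof. by case: sp => _ [h _ _ _ _]. Qed.

Lemma unit_of_npdvd (x : W) : ~ pdvd p x -> x \is a GRing.unit.
Proof. by case: sp => _ [_ h _ _ _]; apply: h. Qed.

Lemma unit_cong x y : x \is a GRing.unit -> cong 1 x y -> y \is a GRing.unit.
Proof.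
move=> ux [t ht]; apply: unit_of_npdvd => -[s hs]; apply: P_nunit.
have e : x = P * (t + s) by rewrite mulrDr -hs -[P]expr1 -ht subrK.
by move: ux; rewrite e unitrM => /andP[].
Qed.

Lemma npdvd_nat n : ~~ (p %| n)%N -> ~ pdvd p (n%:R : W).
Proof.
move=> hn [y hy].
have cp : coprime p n by rewrite prime_coprime.
have [a _ ha] := Bezoutl n (prime_gt0 pr).
move: ha; rewrite (eqP cp) => /dvdnP [k hk].
apply: P_nunit; apply/unitrP; exists (k%:R - a%:R * y).
have e : (1 + a * n)%:R = (k * p)%:R :> W by rewrite hk.
move: e; rewrite natrD natrM natrM -/P hy => e.
split; rewrite ?[_ * P]mulrC mulrBr mulrA [P * _]mulrC -e; ring.
Qed.

Lemma unit_nat n : ~~ (p %| n)%N -> (n%:R : W) \is a GRing.unit.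
Proof. by move=> h; apply: unit_of_npdvd; apply: npdvd_nat. Qed.

Lemma pdvd_nat n : pdvd p (n%:R : W) -> (p %| n)%N.
Proof. by move=> h; apply/negP => /negP /npdvd_nat. Qed.

Lemma fact_dec n : exists2 u : W, u \is a GRing.unit & (n`!)%:R = P ^+ (logn p n`!) * u.
Proof.
exists ((n`!)`_p^')%:R.
  apply: unit_nat; rewrite -p'natE //; exact: part_pnat.
by rewrite -natrX -natrM -p_part partnC // fact_gt0.
Qed.

Lemma fact_cancel n x y : (n`!)%:R * x = (n`!)%:R * y :> W -> x = y.
Proof.
have [u uu ->] := fact_dec n; rewrite -!mulrA => /PX_cancel h.
by rewrite -(mulKr uu x) h mulKr.
Qed.


Definition padic (z : W) := forall L, exists N : nat, cong L z N%:R.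

Lemma padic_nat (N : nat) : padic N%:R.
Proof. by move=> L; exists N; apply: cong_refl. Qed.

Lemma padicM x y : padic x -> padic y -> padic (x * y).
Proof.
move=> hx hy L; have [N hN] := hx L; have [M hM] := hy L.
by exists (N * M)%N; rewrite natrM; apply: cong_mul.
Qed.

Lemma cong_powp j x y : (0 < j)%N -> cong j x y -> cong j.+1 (x ^+ p) (y ^+ p).
Proof.
move=> hj hxy; have [t ht] := hxy.
have h1 : cong 1 x y by apply: cong_le hxy.
have hS : cong 1 (\sum_(i < p) x ^+ (p.-1 - i) * y ^+ i) (\sum_(i < p) y ^+ p.-1).
  apply: cong_sum => i _.
  have -> : y ^+ p.-1 = y ^+ (p.-1 - i) * y ^+ i.
    by rewrite -exprD subnK // -ltnS prednK ?prime_gt0.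
  by apply: cong_mul; [apply: cong_exp|apply: cong_refl].
rewrite sumr_const card_ord in hS.
have [s hs] : cong 1 (\sum_(i < p) x ^+ (p.-1 - i) * y ^+ i) 0.
  by apply: cong_trans hS _; exists (y ^+ p.-1); rewrite subr0 -mulr_natl.
exists (t * s); rewrite subrXX ht; rewrite subr0 in hs; rewrite hs.
by rewrite expr1 exprSr; ring.
Qed.

Lemma cong_powpk k x y : cong 1 x y -> cong k.+1 (x ^+ (p ^ k)) (y ^+ (p ^ k)).
Proof.
move=> h; elim: k => [|k IH]; first by rewrite expn0 !expr1.
by rewrite expnSr !exprM; apply: cong_powp.
Qed.

Lemma omega_unit (a : 'I_p) : (0 < a)%N -> omega a \is a GRing.unit.
Proof.
move=> ha; have [h1 _] := hom _ ha; apply/unitrP; exists (omega a ^+ p.-2).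
have e : omega a * omega a ^+ p.-2 = 1.
  rewrite -exprS -h1; congr (_ ^+ _).
  by have := prime_gt1 pr; case: p => [|[|q]].
by rewrite mulrC e.
Qed.

Lemma omega_cong (a : 'I_p) : (0 < a)%N -> cong 1 (omega a) (a : nat)%:R.
Proof. by move=> ha; have [_ [y hy]] := hom _ ha; exists y; rewrite expr1. Qed.

Lemma omega_expmod (a : 'I_p) n : (0 < a)%N -> omega a ^+ n = omega a ^+ (n %% p.-1).
Proof. by move=> ha; rewrite expr_mod //; case: (hom _ ha). Qed.

Lemma p_gt2 : (2 < p)%N.
Proof.
rewrite ltn_neqAle prime_gt1 // andbT; apply/eqP => e; move: odd_p; by rewrite -e.
Qed.

Lemma padic_omega (a : 'I_p) : (0 < a)%N -> padic (omega a).
Proof.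
move=> ha L; exists (a ^ (p ^ L))%N.
have e : omega a ^+ (p ^ L) = omega a.
  rewrite omega_expmod // -modnXm.
  have -> : (p %% p.-1 = 1)%N.
    have h2 := p_gt2.
    have hp : p = (p.-1 + 1)%N by lia.
    by rewrite {1}hp modnDl modn_small //; lia.
  by rewrite exp1n modn_small ?expr1 //; have := p_gt2; lia.
rewrite -e natrX; apply: (cong_le L L.+1) => //.
by apply: cong_powpk; apply: omega_cong.
Qed.

Lemma prod_nat (N n : nat) : \prod_(j < n) (N%:R - (j : nat)%:R : W) = (N ^_ n)%:R.
Proof.
elim: n => [|n IH]; first by rewrite big_ord0 ffactn0.
rewrite big_ord_recr /= IH ffactnSr natrM.
case: (leqP n N) => h; first by rewrite natrB.
by rewrite ffact_small // mulr0n !mul0r.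
Qed.

Lemma binom_exists z n : padic z ->
  exists c, (n`!)%:R * c = \prod_(j < n) (z - (j : nat)%:R).
Proof.
move=> hz; have [u uu hu] := fact_dec n.
have [N hN] := hz (logn p n`!).
have hc : cong (logn p n`!) (\prod_(j < n) (z - (j : nat)%:R)) ((N ^_ n)%:R).
  rewrite -prod_nat; apply: cong_prod => j _; apply: cong_sub => //; exact: cong_refl.
have [t ht] := hc; exists ('C(N, n)%:R + u^-1 * t).
rewrite mulrDr -natrM mulnC bin_ffact hu.
have -> : P ^+ logn p n`! * u * (u^-1 * t) = P ^+ logn p n`! * t.
  by rewrite -mulrA (mulrA u) mulrV // mul1r.
rewrite -ht; ring.
Qed.

Lemma binomR_spec z n : padic z ->
  (n`!)%:R * binomR z n = \prod_(j < n) (z - (j : nat)%:R).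
Proof.
move=> hz; rewrite /binomR.
exact: (epsilon_spec (inhabits 0) (fun c : W => (n`!)%:R * c = \prod_(j < n) (z - (j : nat)%:R)) (binom_exists z n hz)).
Qed.

Lemma binomR_nat (N n : nat) : binomR (N%:R : W) n = ('C(N, n))%:R.
Proof.
have h := binomR_spec (N%:R) n (padic_nat N).
rewrite prod_nat -bin_ffact mulnC natrM in h.
exact: fact_cancel n _ _ h.
Qed.

Lemma binomR1 (z : W) : binomR z 1 = z.
Proof.
have h : exists c : W, (1`!)%:R * c = \prod_(j < 1) (z - (j : nat)%:R).
  by exists z; rewrite big_ord1 subr0 mul1r.
have := epsilon_spec (inhabits 0) (fun c : W => (1`!)%:R * c = \prod_(j < 1) (z - (j : nat)%:R)) h.
rewrite -/(binomR z 1) big_ord1 /= => e.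
by apply: (fact_cancel 1); rewrite e; rewrite mulr0n subr0 /= mulr1n mul1r.
Qed.

Lemma binom_cong K z (N n : nat) : padic z -> cong (K + logn p n`!) z N%:R ->
  cong K (binomR z n) ('C(N, n))%:R.
Proof.
move=> hz hzN; have [u uu hu] := fact_dec n.
have hc : cong (K + logn p n`!) (\prod_(j < n) (z - (j : nat)%:R)) ((N ^_ n)%:R).
  rewrite -prod_nat; apply: cong_prod => j _; apply: cong_sub => //; exact: cong_refl.
have [t ht] := hc; exists (u^-1 * t).
have e1 := binomR_spec z n hz; have e2 := binomR_spec N%:R n (padic_nat N).
rewrite -prod_nat -e2 -e1 -mulrBr hu exprD in ht.
rewrite -(binomR_nat N n).
have h2 : u * (binomR z n - binomR N%:R n) = P ^+ K * t.
  apply: (PX_cancel (logn p n`!)); rewrite mulrA ht; ring.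
by rewrite -(mulKr uu (binomR z n - binomR N%:R n)) h2; ring.
Qed.

Lemma nat_unit_diff (a b : nat) : (a < p)%N -> (b < p)%N -> a != b ->
  ((a%:R : W) - b%:R) \is a GRing.unit.
Proof.
move=> ha hb hab; case: (leqP a b) => h.
  have hlt : (a < b)%N by rewrite ltn_neqAle hab h.
  rewrite -opprB -natrB // unitrN; apply: unit_nat; rewrite gtnNdvd //; lia.
by rewrite -natrB ?(ltnW h) //; apply: unit_nat; rewrite gtnNdvd //; lia.
Qed.

Lemma omega_diff_unit (a b : 'I_p) : (0 < a)%N -> (0 < b)%N -> a != b ->
  omega a - omega b \is a GRing.unit.
Proof.
move=> ha hb hab; apply: (unit_cong ((a : nat)%:R - (b : nat)%:R)).
  by apply: nat_unit_diff => //.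
by apply: cong_sym; apply: cong_sub; apply: omega_cong.
Qed.

Lemma omega_inj (a b : 'I_p) : (0 < a)%N -> (0 < b)%N -> omega a = omega b -> a = b.
Proof.
move=> ha hb e; apply/eqP; apply/negPn/negP => hab.
by have := omega_diff_unit a b ha hb hab; rewrite e subrr unitr0.
Qed.

Lemma omega_uniq (x y : W) : x ^+ p.-1 = 1 -> y ^+ p.-1 = 1 -> cong 1 x y -> x = y.
Proof.
move=> hx hy hxy.
have h2 := p_gt2.
have yu : y \is a GRing.unit.
  apply/unitrP; exists (y ^+ p.-2); rewrite -exprS -exprSr.
  by have -> : p.-2.+1 = p.-1 by lia.
have hS : cong 1 (\sum_(i < p.-1) x ^+ (p.-1.-1 - i) * y ^+ i) (\sum_(i < p.-1) y ^+ p.-2).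
  apply: cong_sum => i _.
  have -> : y ^+ p.-2 = y ^+ (p.-1.-1 - i) * y ^+ i.
    rewrite -exprD subnK //; have := ltn_ord i; lia.
  by apply: cong_mul; [apply: cong_exp|apply: cong_refl].
rewrite sumr_const card_ord in hS.
have Su : \sum_(i < p.-1) x ^+ (p.-1.-1 - i) * y ^+ i \is a GRing.unit.
  apply: (unit_cong (y ^+ p.-2 *+ p.-1)); last exact: cong_sym.
  rewrite -mulr_natl unitrM unitrX // andbT; apply: unit_nat.
  rewrite gtnNdvd //; lia.
have : (x - y) * \sum_(i < p.-1) x ^+ (p.-1.-1 - i) * y ^+ i = 0.
  by rewrite -subrXX hx hy subrr.
move/(congr1 (fun z => z * (\sum_(i < p.-1) x ^+ (p.-1.-1 - i) * y ^+ i)^-1)).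
rewrite mulrK // mul0r => /eqP; rewrite subr_eq0 => /eqP //.
Qed.

Definition mulI (a b : 'I_p) : 'I_p := Ordinal (ltn_pmod (a * b) (prime_gt0 pr)).

Lemma mulI_gt0 (a b : 'I_p) : (0 < a)%N -> (0 < b)%N -> (0 < mulI a b)%N.
Proof.
move=> ha hb; rewrite /mulI /= lt0n; apply/negP => /eqP h.
have : (p %| a * b)%N by rewrite /dvdn h.
by rewrite Euclid_dvdM // !gtnNdvd.
Qed.

Lemma omega_mul (a b : 'I_p) : (0 < a)%N -> (0 < b)%N ->
  omega a * omega b = omega (mulI a b).
Proof.
move=> ha hb; have hab := mulI_gt0 a b ha hb.
apply: omega_uniq.
- by rewrite exprMn (proj1 (hom _ ha)) (proj1 (hom _ hb)) mulr1.
- by rewrite (proj1 (hom _ hab)).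
apply: cong_trans (cong_mul _ _ _ _ _ (omega_cong a ha) (omega_cong b hb)) _.
apply: cong_trans (cong_sym _ _ _ (omega_cong _ hab)).
rewrite -natrM /mulI /= {1}(divn_eq (a * b) p) natrD.
by exists ((a * b) %/ p)%:R; rewrite addrK natrM mulrC expr1.
Qed.

Lemma mulI_inj (b : 'I_p) : (0 < b)%N -> injective (mulI b).
Proof.
move=> hb x y.
case: (posnP x) => hx; case: (posnP y) => hy.
- by move=> _; apply: val_inj; rewrite /= hx hy.
- move=> e; have := mulI_gt0 b y hb hy; rewrite -e /mulI /= hx muln0 mod0n //.
- move=> e; have := mulI_gt0 b x hb hx; rewrite e /mulI /= hy muln0 mod0n //.
move=> e; apply: omega_inj => //.
have := omega_mul b x hb hx; rewrite e -omega_mul // => h.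
by rewrite -(mulKr (omega_unit b hb) (omega x)) h mulKr ?omega_unit.
Qed.

Lemma sum_reindex (b : 'I_p) (F : 'I_p -> W) : (0 < b)%N ->
  \sum_(a < p | (0 < a)%N) F (mulI b a) = \sum_(a < p | (0 < a)%N) F a.
Proof.
move=> hb; rewrite [RHS](reindex_inj (mulI_inj b hb)); apply: eq_bigl => a.
case: (posnP a) => ha; last by rewrite mulI_gt0.
by rewrite /mulI /= ha muln0 mod0n.
Qed.

Lemma omega_nonroot k : ~~ (p.-1 %| k)%N ->
  exists2 b : 'I_p, (0 < b)%N & omega b ^+ k - 1 \is a GRing.unit.
Proof.
move=> hk; have h2 := p_gt2.
have hr : (0 < k %% p.-1 < p.-1)%N.
  rewrite ltn_pmod ?andbT; last lia.
  by rewrite lt0n; move: hk; rewrite /dvdn.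
have [b [hb hbr]] := exists_nonroot p (k %% p.-1) pr hr.
have hbp : (b < p)%N by case/andP: hb.
exists (Ordinal hbp); first by case/andP: hb.
rewrite omega_expmod /=; last by case/andP: hb.
apply: (unit_cong ((b ^ (k %% p.-1) - 1)%:R)).
  by apply: unit_nat.
rewrite natrB ?expn_gt0; last by case/andP: hb => ->.
apply: cong_sub; last exact: cong_refl.
rewrite natrX; apply: cong_sym; apply: cong_exp; apply: omega_cong => /=.
by case/andP: hb.
Qed.

Lemma sum_omega k : ~~ (p.-1 %| k)%N -> \sum_(a < p | (0 < a)%N) omega a ^+ k = 0.
Proof.
move=> hk; have [b hb hu] := omega_nonroot k hk.
have e : \sum_(a < p | (0 < a)%N) omega a ^+ k = omega b ^+ k * \sum_(a < p | (0 < a)%N) omega a ^+ k.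
  rewrite -{1}(sum_reindex b (fun a => omega a ^+ k) hb) mulr_sumr.
  by apply: eq_bigr => a ha /=; rewrite -omega_mul // exprMn.
move: e; set S := \sum_(a < p | _) _ => e.
have : (omega b ^+ k - 1) * S = 0 by rewrite mulrBl -e mul1r subrr.
by move/(congr1 (fun z => (omega b ^+ k - 1)^-1 * z)); rewrite mulKr // mulr0.
Qed.

Lemma sum_pos_one n : \sum_(a < n | (0 < a)%N) (1 : W) = n.-1%:R.
Proof.
rewrite big_mkcond /=; elim: n => [|n IH]; first by rewrite big_ord0.
rewrite big_ord_recr /= IH; case: n {IH} => [|n] /=; first by rewrite addr0.
by rewrite natr1.
Qed.

Lemma sum_omega0 k : (p.-1 %| k)%N -> \sum_(a < p | (0 < a)%N) omega a ^+ k = p.-1%:R.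
Proof.
move=> hk; rewrite -sum_pos_one; apply: eq_bigr => a ha.
by rewrite (omega_expmod a k ha) (eqP hk) expr0.
Qed.

Definition Bz (z : W) : series W := pow1pX_sub1 z.

Lemma Bz0 z : Bz z 0%N = 0.
Proof. by []. Qed.

Lemma Bz1 z : Bz z 1%N = z.
Proof. by rewrite /Bz /pow1pX_sub1 /= binomR1. Qed.

Lemma coef_XaddC1 (X n : nat) : ((('X + 1) ^+ X : {poly W}))`_n = ('C(X, n))%:R.
Proof.
rewrite addrC exprDn coef_sum.
rewrite (eq_bigr (fun i : 'I_X.+1 => (n == (i : nat))%:R *+ 'C(X, i))); last first.
  by move=> i _; rewrite expr1n mul1r coefMn coefXn.
case: (leqP n X) => h.
  have hh : (n < X.+1)%N by [].
  rewrite (bigD1 (Ordinal hh)) //= eqxx big1 ?addr0 //.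
  by move=> i /negbTE hi; rewrite eqE /= in hi; rewrite eq_sym hi mul0rn.
rewrite bin_small // big1 // => i _.
have : n != (i : nat) by apply/eqP => e; have := ltn_ord i; rewrite -e; lia.
by move/negbTE => ->; rewrite mul0rn.
Qed.

Definition QB (X : nat) : {poly W} := ('X + 1) ^+ X - 1.

Lemma coef_QB X n : (QB X)`_n = Bz X%:R n.
Proof.
rewrite /QB coefB coef_XaddC1 coefC /Bz /pow1pX_sub1 binomR_nat.
case: n => [|n] /=; last by rewrite subr0.
by rewrite bin0 subrr.
Qed.

Lemma scompB_nat (X Y : nat) m : scomp (Bz X%:R) (Bz Y%:R) m = Bz (X%:R * Y%:R) m.
Proof.
have hm : (m < m.+1)%N by [].
rewrite (scomp_tp _ _ _ _ hm (Bz0 _)).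
have aX : agree m.+1 (tp m.+1 (Bz X%:R)) (QB X) by move=> i hi; rewrite coef_tpE // coef_QB.
have aY : agree m.+1 (tp m.+1 (Bz Y%:R)) (QB Y) by move=> i hi; rewrite coef_tpE // coef_QB.
rewrite (agree_comp _ _ _ _ _ aX aY) //; last by rewrite coef_QB.
  rewrite /QB rmorphB /= rmorphXn rmorphD /= comp_polyX comp_polyC subrK.
  rewrite -exprM mulnC -natrM -coef_QB //.
by rewrite coef_tpE.
Qed.

Lemma spow_cong K m (f g : series W) :
  (forall j, (j <= m)%N -> cong K (f j) (g j)) ->
  forall k j, (j <= m)%N -> cong K (spow f k j) (spow g k j).
Proof.
move=> h k; elim: k => [|k IH] j hj; first exact: cong_refl.
rewrite /spow !iterS -!/(spow _ k) /smul; apply: cong_sum => i _; apply: cong_mul.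
  apply: h; apply: leq_trans hj; rewrite -ltnS; exact: ltn_ord.
by apply: IH; apply: leq_trans hj; exact: leq_subr.
Qed.

Lemma scompB (x y : W) : padic x -> padic y -> scomp (Bz x) (Bz y) =1 Bz (x * y).
Proof.
move=> hx hy m; apply: cong_sep => K.
pose L := (K + logn p m`!)%N.
have [X hX] := hx L; have [Y hY] := hy L.
have hBx : forall j, (j <= m)%N -> cong K (Bz x j) (Bz X%:R j).
  move=> j hj; case: j hj => [|j] hj; first exact: cong_refl.
  rewrite /Bz /pow1pX_sub1 /= binomR_nat; apply: binom_cong => //.
  apply: cong_le hX; rewrite leq_add2l; apply: dvdn_leq_log; first exact: fact_gt0.
  exact: fact_dvd.
have hBy : forall j, (j <= m)%N -> cong K (Bz y j) (Bz Y%:R j).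
  move=> j hj; case: j hj => [|j] hj; first exact: cong_refl.
  rewrite /Bz /pow1pX_sub1 /= binomR_nat; apply: binom_cong => //.
  apply: cong_le hY; rewrite leq_add2l; apply: dvdn_leq_log; first exact: fact_gt0.
  exact: fact_dvd.
apply: (cong_trans _ _ (scomp (Bz X%:R) (Bz Y%:R) m)).
  rewrite /scomp; apply: cong_sum => k _; apply: cong_mul.
    by apply: hBx; rewrite -ltnS.
  by apply: (spow_cong K m).
rewrite scompB_nat; apply: cong_sym.
rewrite /Bz /pow1pX_sub1; case: eqP => _; first exact: cong_refl.
rewrite -natrM binomR_nat; apply: binom_cong.
  by apply: padicM.
by rewrite natrM; apply: cong_mul.
Qed.

Definition c0 : W := (p.-1%:R)^-1.

Lemma pm1_unit : (p.-1%:R : W) \is a GRing.unit.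
Proof. by apply: unit_nat; have h := p_gt2; rewrite gtnNdvd //; lia. Qed.

Lemma c0K : c0 * p.-1%:R = 1.
Proof. by rewrite /c0 mulVr // pm1_unit. Qed.

Definition useries : series W :=
  fun n => c0 * \sum_(b < p | (0 < b)%N) (omega b)^-1 * Bz (omega b) n.

Lemma u0 : useries 0%N = 0.
Proof. by rewrite /useries big1 ?mulr0 // => b _; rewrite Bz0 mulr0. Qed.

Lemma u1 : useries 1%N = 1.
Proof.
rewrite /useries (eq_bigr (fun _ => 1)) ?sum_pos_one ?c0K //.
by move=> b hb; rewrite Bz1 mulVr // omega_unit.
Qed.

Lemma gact_u (a : 'I_p) : (0 < a)%N ->
  gact (omega a) useries =1 (fun n => omega a * useries n).
Proof.
move=> ha m; rewrite /gact /useries.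
rewrite (scomp_scale c0 (fun n => \sum_(b < p | (0 < b)%N) (omega b)^-1 * Bz (omega b) n)).
rewrite scomp_sum mulrCA; congr (_ * _).
rewrite (eq_bigr (fun b => (omega b)^-1 * Bz (omega (mulI a b)) m)); last first.
  move=> b hb; rewrite (scompB _ _ (padic_omega _ hb) (padic_omega _ ha)).
  by rewrite (mulrC (omega b)) omega_mul.
have := sum_reindex a (fun b => (omega b)^-1 * Bz (omega b) m) ha; rewrite /= => <-.
rewrite mulr_sumr.
apply: eq_bigr => b hb /=; rewrite -omega_mul // invrM ?omega_unit //.
set B := Bz _ m.
have -> : omega a * ((omega b)^-1 * (omega a)^-1 * B) = (omega b)^-1 * B * (omega a * (omega a)^-1) by ring.
by rewrite mulrV ?omega_unit // mulr1.
Qed.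

Definition Phi (F : series W) : series W := scomp F useries.

Lemma spow_u_low k m : (m < k)%N -> spow useries k m = 0.
Proof. by move=> h; apply: spow_low => //; exact: u0. Qed.

Lemma spow_u_diag k : spow useries k k = 1.
Proof. by rewrite spow_diag ?u0 // u1 expr1n. Qed.

Lemma Phi_tri F m : Phi F m = F m + \sum_(k < m) F k * spow useries k m.
Proof. by rewrite /Phi /scomp big_ord_recr /= spow_u_diag mulr1 addrC. Qed.

Lemma Phi_inj F G : Phi F =1 Phi G -> F =1 G.
Proof.
move=> h m; elim/ltn_ind: m => m IH.
have := h m; rewrite !Phi_tri.
rewrite (eq_bigr (fun k : 'I_m => G k * spow useries k m)); first by move/addIr.
by move=> k _; rewrite IH.
Qed.

Fixpoint build (f : series W) (n : nat) : seq W :=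
  match n with
  | 0 => [:: f 0%N]
  | n'.+1 => rcons (build f n')
      (f n'.+1 - \sum_(k < n'.+1) nth 0 (build f n') k * spow useries k n'.+1)
  end.

Lemma size_build f n : size (build f n) = n.+1.
Proof. by elim: n => [|n IH] //=; rewrite size_rcons IH. Qed.

Lemma build_stable f n m k : (k <= n)%N -> (n <= m)%N ->
  nth 0 (build f m) k = nth 0 (build f n) k.
Proof.
move=> hk; elim: m => [|m IH] hm.
  by move: hm; rewrite leqn0 => /eqP ->.
case: (leqP n m) => h; last by have -> : n = m.+1 by lia.
by rewrite /= nth_rcons size_build ltnS (leq_trans hk h) IH.
Qed.

Definition Finv (f : series W) : series W := fun k => nth 0 (build f k) k.

Lemma Finv_spec f : Phi (Finv f) =1 f.
Proof.
case=> [|n]; first by rewrite /Phi scomp0 ?u0.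
rewrite Phi_tri /Finv /= nth_rcons size_build ltnn eqxx.
have e : \sum_(k < n.+1) nth 0 (build f k) k * spow useries k n.+1 =
          \sum_(k < n.+1) nth 0 (build f n) k * spow useries k n.+1.
  by apply: eq_bigr => k _; rewrite (build_stable f k n k) // -ltnS.
by rewrite e subrK.
Qed.

Lemma Phi_surj f : exists F, Phi F =1 f.
Proof. by exists (Finv f); apply: Finv_spec. Qed.

Lemma Phi_gact (a : 'I_p) F : (0 < a)%N ->
  gact (omega a) (Phi F) =1 Phi (fun n => omega a ^+ n * F n).
Proof.
move=> ha m; rewrite /gact /Phi scompA ?u0 //.
have -> : scomp useries (Bz (omega a)) = (fun n => omega a * useries n).
  by apply: functional_extensionality => n; apply: gact_u.
by rewrite scomp_inner_scale.
Qed.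

Lemma Phi_mul F G : Phi (smul F G) =1 smul (Phi F) (Phi G).
Proof. by apply: scompM; exact: u0. Qed.

Lemma omega_inv (a : 'I_p) : (0 < a)%N -> (omega a)^-1 = omega a ^+ p.-2.
Proof.
move=> ha; apply: (mulrI (omega_unit a ha)); rewrite mulrV ?omega_unit // -exprS.
have h2 := p_gt2; have -> : p.-2.+1 = p.-1 by lia.
by rewrite (proj1 (hom _ ha)).
Qed.

Lemma orth i r : (i < p.-1)%N -> (r < p.-1)%N ->
  \sum_(a < p | (0 < a)%N) ((omega a)^-1) ^+ i * omega a ^+ r = (i == r)%:R * p.-1%:R.
Proof.
move=> hi hr; have h2 := p_gt2.
case: eqP => [<-|/eqP hir].
  rewrite mul1r -sum_pos_one; apply: eq_bigr => a ha.
  by rewrite -exprMn mulVr ?omega_unit // expr1n.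
rewrite mul0r (eq_bigr (fun a => omega a ^+ (p.-2 * i + r))); last first.
  by move=> a ha; rewrite omega_inv // -exprM exprD.
apply: sum_omega.
have hp2 : p.-2 = (p.-1).-1 by lia.
case: (ltngtP i r) => h; last by rewrite h eqxx in hir.
  have e : (p.-2 * i + r = p.-1 * i + (r - i))%N by nia.
  by rewrite e dvdn_addr ?dvdn_mulr // gtnNdvd //; lia.
have e : (p.-2 * i + r = p.-1 * i.-1 + (p.-1 - (i - r)))%N by nia.
by rewrite e dvdn_addr ?dvdn_mulr // gtnNdvd //; lia.
Qed.

Lemma geom (a b : 'I_p) : (0 < a)%N -> (0 < b)%N ->
  \sum_(r < p.-1) ((omega b)^-1 * omega a) ^+ r = (a == b)%:R * p.-1%:R.
Proof.
move=> ha hb; case: eqP => [->|/eqP hab].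
  by rewrite mulVr ?omega_unit // mul1r (eq_bigr (fun _ => 1)) ?sumr_const ?card_ord // => r _; rewrite expr1n.
rewrite mul0r.
set x := (omega b)^-1 * omega a.
have xu : x - 1 \is a GRing.unit.
  have -> : x - 1 = (omega b)^-1 * (omega a - omega b).
    by rewrite /x mulrBr mulVr ?omega_unit.
  by rewrite unitrM unitrV omega_unit // omega_diff_unit.
have : (x - 1) * \sum_(r < p.-1) x ^+ r = 0.
  rewrite -subrX1 /x exprMn exprVn (proj1 (hom _ ha)) (proj1 (hom _ hb)).
  by rewrite invr1 mul1r subrr.
by move/(congr1 (fun z => (x - 1)^-1 * z)); rewrite mulKr // mulr0.
Qed.

Lemma smul_supp (C E : series W) n :
  (forall j, ~~ (p.-1 %| j)%N -> C j = 0) -> (forall j, (p.-1 <= j)%N -> E j = 0) ->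
  smul C E n = C (n %/ p.-1 * p.-1)%N * E (n %% p.-1)%N.
Proof.
move=> hC hE; have h2 := p_gt2; set d := p.-1.
have d0 : (0 < d)%N by rewrite /d; lia.
have hj0 : (n %/ d * d < n.+1)%N by rewrite ltnS leq_trunc_div.
rewrite /smul (bigD1 (Ordinal hj0)) //= big1 ?addr0.
  by congr (_ * E _); rewrite {1}(divn_eq n d) addKn.
move=> [j hj] /= hne; have hne' : j != (n %/ d * d)%N by apply: contra hne => /eqP e; apply/eqP/val_inj.
case hdj : (d %| j)%N; last by rewrite hC ?hdj // mul0r.
rewrite hE ?mulr0 //.
move/dvdnP: hdj => [q hjq]; subst j.
have hq : (q <= n %/ d)%N by rewrite leq_divRL // -ltnS.
have hq' : (q < n %/ d)%N.
  rewrite ltn_neqAle hq andbT; apply: contra hne' => /eqP ->; by [].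
have : (q.+1 * d <= n %/ d * d)%N by rewrite leq_mul2r hq' orbT.
have := divn_eq n d; rewrite mulSn; lia.
Qed.

Definition Eser : series W := fun n => if (n < p.-1)%N then 1 else 0.
Definition eser : series W := Phi Eser.
Definition Ea (a : 'I_p) : series W := fun n => omega a ^+ n * Eser n.

Lemma gact_e (a : 'I_p) : (0 < a)%N -> gact (omega a) eser = Phi (Ea a).
Proof. by move=> ha; apply: functional_extensionality => n; rewrite /eser Phi_gact. Qed.

Lemma Phi_sum (G : 'I_p -> series W) n :
  \sum_(a < p | (0 < a)%N) Phi (G a) n = Phi (fun m => \sum_(a < p | (0 < a)%N) G a m) n.
Proof.
have -> : (fun m => \sum_(a < p | (0 < a)%N) G a m) = (fun m => \sum_(a < p | (0 < a)%N) 1 * G a m).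
  by apply: functional_extensionality => m; apply: eq_bigr => a _; rewrite mul1r.
rewrite /Phi scomp_sum; apply: eq_bigr => a _; by rewrite mul1r.
Qed.

Lemma combo_Phi (C : 'I_p -> series W) :
  combo omega (fun a => Phi (C a)) eser =1 Phi (fun n => \sum_(a < p | (0 < a)%N) smul (C a) (Ea a) n).
Proof.
move=> n; rewrite /combo -Phi_sum; apply: eq_bigr => a ha.
by rewrite gact_e // -Phi_mul.
Qed.

Lemma Ea_supp (a : 'I_p) j : (p.-1 <= j)%N -> Ea a j = 0.
Proof. by move=> h; rewrite /Ea /Eser ltnNge h mulr0. Qed.

Lemma Ea_low (a : 'I_p) j : (j < p.-1)%N -> Ea a j = omega a ^+ j.
Proof. by move=> h; rewrite /Ea /Eser h mulr1. Qed.

Lemma d_pos : (0 < p.-1)%N.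
Proof. by have := p_gt2; lia. Qed.

Lemma spanning (f : series W) : exists c : 'I_p -> series W,
  (forall a : 'I_p, (0 < a)%N -> fixedGf omega (c a)) /\ f =1 combo omega c eser.
Proof.
have [F hF] := Phi_surj f.
pose C (a : 'I_p) : series W := fun n => if (p.-1 %| n)%N then
   c0 * \sum_(i < p.-1) ((omega a)^-1) ^+ i * F (n + i)%N else 0.
exists (fun a => Phi (C a)); split.
  move=> a ha b hb m; rewrite Phi_gact //; congr (Phi _ m).
  apply: functional_extensionality => n; rewrite /C; case: ifP => h; last by rewrite mulr0.
  by rewrite omega_expmod // (eqP h) expr0 mul1r.
move=> n; rewrite combo_Phi -hF; congr (Phi _ n).
apply: functional_extensionality => m.
have hsupp a : forall j, ~~ (p.-1 %| j)%N -> C a j = 0.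
  by move=> j /negbTE h; rewrite /C h.
rewrite (eq_bigr (fun a => C a (m %/ p.-1 * p.-1)%N * omega a ^+ (m %% p.-1)%N)); last first.
  by move=> a ha; rewrite (smul_supp (C a) (Ea a) m (hsupp a) (Ea_supp a)) Ea_low // ltn_pmod // d_pos.
rewrite /C dvdn_mull // (eq_bigr (fun a => c0 * \sum_(i < p.-1) (((omega a)^-1) ^+ i * omega a ^+ (m %% p.-1)%N) * F (m %/ p.-1 * p.-1 + i)%N)); last first.
  move=> a ha; rewrite -mulrA; congr (_ * _); rewrite mulr_suml; apply: eq_bigr => i _; ring.
rewrite -mulr_sumr exchange_big /=.
rewrite (eq_bigr (fun i : 'I_p.-1 => ((i : nat) == (m %% p.-1)%N)%:R * p.-1%:R * F (m %/ p.-1 * p.-1 + i)%N)); last first.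
  by move=> i _; rewrite -mulr_suml orth // ltn_pmod // d_pos.
have hr : (m %% p.-1 < p.-1)%N by rewrite ltn_pmod // d_pos.
rewrite (bigD1 (Ordinal hr)) //= eqxx big1 ?addr0.
  by rewrite mul1r mulrA c0K mul1r -divn_eq.
by move=> i /negbTE hi; rewrite eqE /= in hi; rewrite hi !mul0r.
Qed.

Lemma fixed_supp (c : series W) : fixedGf omega c ->
  forall n, ~~ (p.-1 %| n)%N -> Finv c n = 0.
Proof.
move=> hc n hn; have [b hb hu] := omega_nonroot n hn.
have e : Phi (fun m => omega b ^+ m * Finv c m) =1 Phi (Finv c).
  move=> m; rewrite -Phi_gact //.
  have -> : Phi (Finv c) = c by apply: functional_extensionality => k; apply: Finv_spec.
  exact: hc.
have := Phi_inj _ _ e n => h.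
have : (omega b ^+ n - 1) * Finv c n = 0 by rewrite mulrBl h mul1r subrr.
by move/(congr1 (fun z => (omega b ^+ n - 1)^-1 * z)); rewrite mulKr // mulr0.
Qed.

Lemma independence (c : 'I_p -> series W) :
  (forall a : 'I_p, (0 < a)%N -> fixedGf omega (c a)) -> combo omega c eser =1 szero W ->
  forall a : 'I_p, (0 < a)%N -> c a =1 szero W.
Proof.
move=> hfix h0.
pose C a := Finv (c a).
have hc : forall a, c a = Phi (C a).
  by move=> a; apply: functional_extensionality => k; rewrite Finv_spec.
have hsupp : forall a : 'I_p, (0 < a)%N -> forall j, ~~ (p.-1 %| j)%N -> C a j = 0.
  by move=> a ha; apply: fixed_supp; apply: hfix.
have hcC : c = (fun a => Phi (C a)) by apply: functional_extensionality => a; apply: hc.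
have hG : (fun n => \sum_(a < p | (0 < a)%N) smul (C a) (Ea a) n) =1 (fun _ => 0).
  apply: Phi_inj => n.
  rewrite -combo_Phi -hcC h0 /Phi scomp_zero //.
have hG' : forall (q r : nat), (r < p.-1)%N ->
    \sum_(a < p | (0 < a)%N) C a (q * p.-1)%N * omega a ^+ r = 0.
  move=> q r hr; rewrite -[RHS](hG (q * p.-1 + r)%N) /=.
  apply: eq_bigr => a ha.
  rewrite (smul_supp (C a) (Ea a) _ (hsupp a ha) (Ea_supp a)).
  have hd := d_pos.
  rewrite divnMDl // divn_small // addn0 modnMDl modn_small // Ea_low //.
move=> b hb n; rewrite hc.
have -> : C b = (fun _ => 0).
  apply: functional_extensionality => j.
  case hj : (p.-1 %| j)%N; last by rewrite hsupp // hj.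
  move/dvdnP: hj => [q ->].
  have e : \sum_(r < p.-1) ((omega b)^-1) ^+ r * \sum_(a < p | (0 < a)%N) C a (q * p.-1)%N * omega a ^+ r = 0.
    by rewrite big1 // => r _; rewrite hG' // mulr0.
  rewrite (eq_bigr (fun r : 'I_p.-1 => \sum_(a < p | (0 < a)%N) C a (q * p.-1)%N * ((omega b)^-1 * omega a) ^+ r)) in e; last first.
    by move=> r _; rewrite mulr_sumr; apply: eq_bigr => a _; rewrite exprMn; ring.
  rewrite exchange_big /= in e.
  rewrite (eq_bigr (fun a => C a (q * p.-1)%N * ((a == b)%:R * p.-1%:R))) in e; last first.
    by move=> a ha; rewrite -mulr_sumr geom.
  rewrite (bigD1 b) //= eqxx big1 ?addr0 in e; last first.
    by move=> a /andP [_ /negbTE ->]; rewrite !mul0r mulr0.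
  move: e; rewrite mul1r => /(congr1 (fun z => z * c0)); rewrite mul0r -mulrA (mulrC _ c0) c0K mulr1 //.
by rewrite /Phi scomp_zero.
Qed.

Lemma proj_Phi i : (i < p.-1)%N ->
  proj_i omega i eser =1 Phi (fun m => (i == m)%:R).
Proof.
move=> hi n; rewrite /proj_i -/c0.
rewrite (eq_bigr (fun a => ((omega a)^-1) ^+ i * Phi (Ea a) n)); last first.
  by move=> a ha; rewrite gact_e.
rewrite /Phi -scomp_sum -scomp_scale; congr (scomp _ _ n).
apply: functional_extensionality => m.
case: (ltnP m p.-1) => hm.
  rewrite (eq_bigr (fun a => ((omega a)^-1) ^+ i * omega a ^+ m)); last first.
    by move=> a ha; rewrite Ea_low.
  by rewrite orth // mulrCA c0K mulr1.
rewrite big1 ?mulr0; last by move=> a ha; rewrite Ea_supp // mulr0.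
have : i != m by apply/eqP => e; move: hi; rewrite e ltnNge hm.
by move/negbTE => ->.
Qed.

Lemma proj_nonpdvd i : (i < p.-1)%N -> ~ pdvd_series p (proj_i omega i eser).
Proof.
move=> hi [h hh]; have := hh i; rewrite proj_Phi // Phi_tri eqxx big1 ?addr0; last first.
  move=> k _; have : i != k by apply/eqP => e; have := ltn_ord k; rewrite -e ltnn.
  by move/negbTE => ->; rewrite mul0r.
rewrite /sscale => e; apply: P_nunit; apply/unitrP; exists (h i).
by rewrite mulrC -e.
Qed.

Theorem main_thm : exists e : series W,
    is_basis_over_S0 omega e /\
    (forall i : nat, (i <= p - 2)%N -> ~ pdvd_series p (proj_i omega i e)).
Proof.
exists eser; split; first split.
- exact: spanning.
- exact: independence.
move=> i hi; apply: proj_nonpdvd; have := p_gt2; lia.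
Qed.

End Main.

Theorem lemma24 (p : nat) (W : comUnitRingType) (omega : 'I_p -> W) :
  prime p -> odd p -> strict_p_ring W p ->
  (forall a : 'I_p, (0 < a)%N ->
     omega a ^+ p.-1 = 1 /\ pdvd p (omega a - (a : nat)%:R)) ->
  exists e : series W,
    is_basis_over_S0 omega e /\
    (forall i : nat, (i <= p - 2)%N -> ~ pdvd_series p (proj_i omega i e)).
Proof.
move=> pr op sp hom; exact: (main_thm p W omega pr op sp hom).
Qed.
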